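(* Assume the graph $(\overline{\mathbb V},\overline E)$ is connected. Let $\sigma$ be a uniform random bijection from $\{1,\dots,|\overline E|\}$ to $\overline E$, and let $\eta^*$ be the configuration produced by the perfect simulation procedure described in the context. Then the law of $\eta^*$ is the unique invariant measure of the spiking disagreement process $\eta(t)$.
   Context: Graph: finite oriented graph $(\overline{\mathbb V},\overline E)$ with internal vertices $\mathbb V$, boundary vertices $\partial\mathbb V$; $E$ = edges with both endpoints in $\mathbb V$, $\partial E$ = edges with one endpoint in $\partial\mathbb V$ (written $ij$ with $j\in\partial\mathbb V$); no edges between boundary vertices. Two edges are neighbors if they share exactly one vertex. Spiking disagreement process: Markov process on $\mathcal E_n:=\{\eta\in\{0,1\}^{\overline E}:\eta_{ij}=1\ \forall ij\in\partial E,\ \text{and }\eta_{ij}+\eta_{k\ell}>0\text{ whenever }ij,k\ell\in E\text{ share exactly one vertex}\}$ with generator $L^\eta f(\eta)=\sum_{ij\in\overline E}\eta_{ij}[f(H_{ij}\eta)-f(\eta)]$, where $(H_{ij}\eta)_{k\ell}=0$ if $k\ell=ij$ and $j\in\mathbb V$; $(H_{ij}\eta)_{k\ell}=1$ if $|\{k,\ell\}\cap\{i,j\}|=1$; and $(H_{ij}\eta)_{k\ell}=\eta_{k\ell}$ otherwise. (It is the indicator process $\eta_{ij}(t)=\mathbf 1\{O_i(t)\neq O_j(t)\}$ of disagreement edges of the opinion process.) Perfect simulation: set $\eta_{ij}[0]=0$ for $ij\in E$, $\eta_{ij}[0]=1$ for $ij\in\partial E$, and $E[0]=\partial E$. For $n\ge0$: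 $\eta_{ij}[n+1]=\eta_{ij}[n]+\mathbf 1\{ij\notin E[n]\text{ and }ij\text{ is a neighbor of }\sigma(n+1)\}$ and $E[n+1]=E[n]\cup\{\sigma(n+1)\}\cup\{\text{neighbors of }\sigma(n+1)\}$. $\eta^*:=\eta[n]$ for the first $n$ with $E[n]=\overline E$. *)

(* Defs.v *)
From HB Require Import structures.
From mathcomp Require Import all_boot all_order all_algebra.
Set Implicit Arguments. Unset Strict Implicit. Unset Printing Implicit Defensive.
Import Order.TTheory GRing.Theory Num.Theory.
Local Open Scope ring_scope.

Section SpikingDisagreement.
(* Vertices: the finite type T (= \overline{V}); boundary vertices: bnd;
   internal vertices: ~: bnd.  Oriented edges \overline{E}: the set E of
   ordered pairs (i, j). *)
Variables (T : finType) (bnd : {set T}) (E : {set T * T}).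

Definition edge : finType := {e : T * T | e \in E}.

Definition config := {ffun edge -> bool}.

(* ij is in E (both endpoints internal) *)
Definition internal (e : edge) : bool :=
  ((val e).1 \notin bnd) && ((val e).2 \notin bnd).

Definition neighb (e f : T * T) : bool :=
  #|[set e.1; e.2] :&: [set f.1; f.2]| == 1%N.

Definition admissible (eta : config) : bool :=
  [forall e : edge, ~~ internal e ==> eta e] &&
  [forall e : edge, forall f : edge,
     [&& internal e, internal f & neighb (val e) (val f)] ==> eta e || eta f].

Definition spike (e : edge) (eta : config) : config :=
  [ffun f : edge =>
     if (f == e) && ((val e).2 \notin bnd) then false
     else if neighb (val f) (val e) then true
     else eta f].

Definition generator (R : pzRingType) (g : config -> R) (eta : config) : R :=
  \sum_(e : edge) (eta e)%:R * (g (spike e eta) - g eta).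

Definition prob_on_states (R : numDomainType) (mu : config -> R) : Prop :=
  [/\ forall eta, 0 <= mu eta,
      forall eta, ~~ admissible eta -> mu eta = 0
    & \sum_(eta : config) mu eta = 1].

Definition invariant_measure (R : numDomainType) (mu : config -> R) : Prop :=
  forall g : config -> R,
    \sum_(eta : config | admissible eta) mu eta * generator g eta = 0.

Definition nedges : nat := #|edge|.

Definition sim_init : config * {set edge} :=
  ([ffun e => ~~ internal e], [set e | ~~ internal e]).

Definition sim_step (s : config * {set edge}) (x : edge) : config * {set edge} :=
  ([ffun f => s.1 f || ((f \notin s.2) && neighb (val f) (val x))],
   s.2 :|: [set x] :|: [set f | neighb (val f) (val x)]).

(* sim sigma n = (eta[n], E[n]); sigma is indexed from 0, i.e. the paper's
   sigma(n+1) is sigma n here *)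
Fixpoint sim (sigma : {ffun 'I_nedges -> edge}) (n : nat) : config * {set edge} :=
  match n with
  | 0 => sim_init
  | n'.+1 =>
      match insub n' with
      | Some i => sim_step (sim sigma n') (sigma i)
      | None => sim sigma n'
      end
  end.

Definition first_full (sigma : {ffun 'I_nedges -> edge}) : nat :=
  find (fun n => (sim sigma n).2 == setT) (iota 0 nedges.+1).

Definition eta_star (sigma : {ffun 'I_nedges -> edge}) : config :=
  (sim sigma (first_full sigma)).1.

Definition bijections : {set {ffun 'I_nedges -> edge}} :=
  [set sigma : {ffun 'I_nedges -> edge} | injectiveb sigma].

Definition law_eta_star (R : fieldType) (eta : config) : R :=
  #|[set sigma in bijections | eta_star sigma == eta]|%:R / #|bijections|%:R.

End SpikingDisagreement.

Definition graph_connected (T : finType) (E : {set T * T}) : Prop :=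
  forall x y : T, connect [rel u v | ((u, v) \in E) || ((v, u) \in E)] x y.

(* Main.v *)
Require Import Defs.
From Stdlib Require Import FunctionalExtensionality.
From HB Require Import structures.
From mathcomp Require Import all_boot all_order all_algebra zify.
Import Order.TTheory GRing.Theory Num.Theory.
Set Implicit Arguments. Unset Strict Implicit. Unset Printing Implicit Defensive.

Section Basics.
Variables (T : finType) (bnd : {set T}) (E : {set T * T}).
Hypothesis loopless : forall e, e \in E -> e.1 != e.2.
Hypothesis bnd_orient : forall e, e \in E -> e.1 \notin bnd.
Local Notation edge := (edge E).
Local Notation config := (config E).

Lemma internalE (e : edge) : internal bnd e = ((val e).2 \notin bnd).
Proof. by rewrite /internal (bnd_orient (valP e)). Qed.

Lemma neighb_irr (e : edge) : neighb (val e) (val e) = false.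
Proof. by rewrite /neighb setIid cards2 (loopless (valP e)). Qed.

Lemma neighbC (x y : T * T) : neighb x y = neighb y x.
Proof. by rewrite /neighb setIC. Qed.

Lemma adm_bnd (eta : config) f : admissible bnd eta -> ~~ internal bnd f -> eta f.
Proof. by case/andP=> /forallP H _ /(implyP (H f)). Qed.

Lemma adm_int (eta : config) e f : admissible bnd eta -> internal bnd e ->
  internal bnd f -> neighb (val e) (val f) -> eta e || eta f.
Proof.
case/andP=> _ /forallP H ie if_ nef.
by move: (H e) => /forallP /(_ f) /implyP; apply; rewrite ie if_ nef.
Qed.

Lemma spike_id (eta : config) e : admissible bnd eta -> eta e = false ->
  spike bnd e eta = eta.
Proof.
move=> ad ee; have ie : internal bnd e.
  by apply/negP => /negP /(adm_bnd ad); rewrite ee.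
apply/ffunP => f; rewrite ffunE.
case: eqP => [->|nfe] /=; first by rewrite -internalE ie ee.
case nb: (neighb _ _) => //.
case: (boolP (internal bnd f)) => [if_|/(adm_bnd ad) //].
by move: (adm_int ad ie if_); rewrite neighbC nb ee => /(_ isT).
Qed.

Lemma spike_adm (eta : config) e : admissible bnd eta -> admissible bnd (spike bnd e eta).
Proof.
move=> ad; apply/andP; split.
  apply/forallP => f; apply/implyP => nf; rewrite ffunE.
  case: eqP => [fe|_] /=.
    move: nf; rewrite fe internalE; case: ifP => [H nf|/negbFE H _]; first by case/negP: nf.
    rewrite neighb_irr; apply: (adm_bnd ad); by rewrite internalE negbK.
  by case: ifP => // _; exact: (adm_bnd ad nf).
apply/forallP => f; apply/forallP => g; apply/implyP => /and3P [if_ ig nfg].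
rewrite !ffunE.
case: (f =P e) => [fe|nfe] /=.
  rewrite fe in nfg *.
  have gne : g != e by apply/eqP => ge; rewrite ge neighb_irr in nfg.
  by rewrite (negbTE gne) /= neighbC; move: nfg => /= ->; rewrite orbT.
case: (g =P e) => [ge|nge] /=.
  by rewrite ge in nfg *; move: nfg => /= ->.
case: ifP => // _; case: ifP => // _.
  by rewrite orbT. exact: (adm_int ad if_ ig nfg).
Qed.


Definition Sq (s : seq edge) (eta : config) : config :=
  foldl (fun z e => spike bnd e z) eta s.

Lemma Sq_adm s (eta : config) : admissible bnd eta -> admissible bnd (Sq s eta).
Proof. by elim: s eta => [|e s IH] eta ad //=; apply: IH; apply: spike_adm. Qed.

Lemma spike_bnd e (eta : config) f : (val f).2 \in bnd ->
  spike bnd e eta f = neighb (val f) (val e) || eta f.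
Proof.
move=> /= fb; rewrite ffunE; case: (f =P e) => [fe|_] /=; last by case: ifP.
by rewrite -fe fb /=; case: ifP.
Qed.

Lemma Sq_bnd s (eta : config) (f : edge) : (val f).2 \in bnd -> eta f -> Sq s eta f.
Proof.
elim: s eta => //= e s IH eta fb ef; apply: IH => //.
by rewrite spike_bnd // ef orbT.
Qed.

Definition touch (f : edge) (s : seq edge) :=
  has (fun e => (e == f) || neighb (val f) (val e)) s.

Lemma Sq_touch s (eta eta' : config) (f : edge) : (val f).2 \notin bnd -> touch f s ->
  Sq s eta f = Sq s eta' f.
Proof.
move=> /= fb; elim/last_ind: s => [//|s e IH].
rewrite /touch has_rcons /Sq !foldl_rcons -/(Sq s eta) -/(Sq s eta') !ffunE.
case: (f =P e) => [fe|nfe] /=; first by rewrite -fe fb.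
rewrite eq_sym (introF eqP nfe) /=.
by case: ifP => // _ /= /IH.
Qed.

Lemma Sq_cover s (eta eta' : config) : (forall f, f \in s) -> admissible bnd eta ->
  admissible bnd eta' -> Sq s eta = Sq s eta'.
Proof.
move=> cov ad ad'; apply/ffunP => f.
case: (boolP ((val f).2 \in bnd)) => fb.
  have nf : ~~ internal bnd f by rewrite internalE fb.
  by rewrite !Sq_bnd //; apply: adm_bnd.
apply: Sq_touch => //; apply/hasP; exists f => //; by rewrite eqxx.
Qed.

Fixpoint seqs (n : nat) : seq (seq edge) :=
  if n is n'.+1 then [seq e :: t | e <- enum edge, t <- seqs n'] else [:: [::]].

Lemma size_seqs n : size (seqs n) = (#|edge| ^ n)%N.
Proof. by elim: n => //= n IH; rewrite size_allpairs IH -cardE expnS. Qed.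

Lemma mem_seqs s : s \in seqs (size s).
Proof.
elim: s => [|e s IH] /=; first by rewrite inE.
by apply: allpairs_f => //; rewrite mem_enum.
Qed.

Local Open Scope ring_scope.

Lemma big_seqs (R : pzRingType) n (F : seq edge -> R) :
  \sum_(s <- seqs n.+1) F s = \sum_(e : edge) \sum_(t <- seqs n) F (e :: t).
Proof. by rewrite /= big_allpairs_dep big_enum. Qed.


Lemma stat_step (R : realFieldType) (x : config -> R) g :
  prob_on_states bnd x -> invariant_measure bnd x ->
  \sum_eta x eta * \sum_e g (spike bnd e eta) = #|edge|%:R * \sum_eta x eta * g eta.
Proof.
case=> _ x0 _ inv; have := inv g.
have H : forall eta, x eta * generator bnd g eta =
    x eta * \sum_e g (spike bnd e eta) - #|edge|%:R * (x eta * g eta).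
  move=> eta; case: (boolP (admissible bnd eta)) => ad; last first.
    by rewrite x0 // !mul0r mulr0 subrr.
  rewrite /generator (eq_bigr (fun e => g (spike bnd e eta) - g eta)); last first.
    move=> e _; case Ee: (eta e); first by rewrite mul1r.
    by rewrite (spike_id ad Ee) subrr mulr0.
  rewrite sumrB mulrBr; congr (_ - _).
  by rewrite sumr_const mulr_natl mulrnAr.
rewrite big_mkcond /= (eq_bigr (fun eta => x eta * generator bnd g eta)); last first.
  move=> eta _; case: ifP => // /negbT nad; by rewrite x0 // mul0r.
rewrite (eq_bigr _ (fun eta _ => H eta)) sumrB mulr_sumr => /eqP.
by rewrite subr_eq0 => /eqP.
Qed.


Lemma stat_pow (R : realFieldType) (x : config -> R) n :
  prob_on_states bnd x -> invariant_measure bnd x -> forall g,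
  \sum_eta x eta * \sum_(s <- seqs n) g (Sq s eta) =
  (#|edge| ^ n)%:R * \sum_eta x eta * g eta.
Proof.
move=> px ix; elim: n => [|n IH] g.
  rewrite expn0 mul1r; apply: eq_bigr => eta _; by rewrite big_seq1.
rewrite (eq_bigr (fun eta => x eta * \sum_e
   (fun z => \sum_(t <- seqs n) g (Sq t z)) (spike bnd e eta))); last first.
  by move=> eta _; rewrite big_seqs.
by rewrite (@stat_step _ x (fun z => \sum_(t <- seqs n) g (Sq t z)) px ix) IH expnS natrM mulrA.
Qed.

Lemma uniq_stat (R : realFieldType) (x y : config -> R) :
  prob_on_states bnd x -> invariant_measure bnd x ->
  prob_on_states bnd y -> invariant_measure bnd y -> forall eta, x eta = y eta.
Proof.
move=> px ix py iy.
set m := #|edge|; set N := (m ^ m)%N.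
pose d := fun eta => x eta - y eta.
have dW : forall g, \sum_eta d eta * \sum_(s <- seqs m) g (Sq s eta) =
    N%:R * \sum_eta d eta * g eta.
  move=> g; rewrite /d.
  under eq_bigr do rewrite mulrBl.
  rewrite sumrB !stat_pow //.
  under [in RHS]eq_bigr do rewrite mulrBl.
  by rewrite sumrB mulrBr.
have d0 : forall eta, ~~ admissible bnd eta -> d eta = 0.
  by move=> eta nad; rewrite /d; case: px => _ -> // _; case: py => _ -> // _; rewrite subrr.
have dsum : \sum_eta d eta = 0.
  by rewrite /d sumrB; case: px => _ _ ->; case: py => _ _ ->; rewrite subrr.
pose cov := fun s : seq edge => [forall f, f \in s].
pose B := fun eta eta' : config =>
  \sum_(s <- seqs m | ~~ cov s) ((Sq s eta == eta')%:R : R).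
have key : forall eta', N%:R * d eta' = \sum_eta d eta * B eta eta'.
  move=> eta'; have := dW (fun z => (z == eta')%:R); rewrite /=.
  have e1 : \sum_eta d eta * ((eta == eta')%:R) = d eta'.
    rewrite (bigD1 eta') //= eqxx mulr1 big1 ?addr0 //.
    by move=> eta /negbTE ->; rewrite mulr0.
  rewrite e1 => <-.
  under eq_bigr do rewrite (bigID cov) /= mulrDr.
  rewrite big_split /=.
  suff -> : \sum_eta d eta * \sum_(s <- seqs m | cov s) ((Sq s eta == eta')%:R : R) = 0.
    by rewrite add0r.
  case: (pickP (fun z : config => admissible bnd z)) => [eta0 ad0|noad]; last first.
    by apply: big1 => eta _; rewrite d0 ?mul0r // noad.
  rewrite (eq_bigr (fun eta => d eta *
     \sum_(s <- seqs m | cov s) ((Sq s eta0 == eta')%:R : R))); last first.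
    move=> eta _; case: (boolP (admissible bnd eta)) => ad; last by rewrite d0 ?mul0r.
    congr (_ * _); apply: eq_bigr => s /forallP cs.
    by rewrite (Sq_cover cs ad ad0).
  by rewrite -mulr_suml dsum mul0r.
have B0 : forall eta eta', 0 <= B eta eta'.
  by move=> eta eta'; apply: sumr_ge0 => s _; apply: ler0n.
set K := count (predC cov) (seqs m).
have Bsum : forall eta, \sum_eta' B eta eta' = K%:R.
  move=> eta; rewrite /B exchange_big /=.
  rewrite (eq_bigr (fun _ => 1)); last first.
    move=> s _; rewrite (bigD1 (Sq s eta)) //= eqxx big1 ?addr0 //.
    by move=> z; rewrite eq_sym => /negbTE ->.
  by rewrite /K -sum1_count natr_sum.
have KN : (K < N)%N.
  have : (0 < count cov (seqs m))%N.
    rewrite -has_count; apply/hasP; exists (enum edge).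
      by rewrite /N /m cardE mem_seqs.
    by apply/forallP => f; rewrite mem_enum.
  by rewrite /K /N -size_seqs -(count_predC cov); lia.
have le1 : forall eta', N%:R * `|d eta'| <= \sum_eta `|d eta| * B eta eta'.
  move=> eta'.
  have -> : N%:R * `|d eta'| = `|N%:R * d eta'| by rewrite normrM normr_nat.
  rewrite key; apply: le_trans (ler_norm_sum _ _ _) _.
  by apply: ler_sum => eta _; rewrite normrM (ger0_norm (B0 _ _)).
have Sge0 : 0 <= \sum_eta `|d eta| by apply: sumr_ge0 => eta _; apply: normr_ge0.
have S0 : \sum_eta `|d eta| = 0.
  have H : N%:R * \sum_eta `|d eta| <= K%:R * \sum_eta `|d eta|.
    rewrite mulr_sumr; apply: le_trans (ler_sum _ (fun eta' _ => le1 eta')) _.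
    rewrite exchange_big mulr_sumr le_eqVlt; apply/orP; left; apply/eqP.
    by apply: eq_bigr => eta _; rewrite -mulr_sumr Bsum mulrC.
  apply/eqP; rewrite eq_le Sge0 andbT.
  have : (N%:R - K%:R) * \sum_eta `|d eta| <= 0 by rewrite mulrBl subr_le0.
  by rewrite pmulr_rle0 // subr_gt0 ltr_nat.
move=> eta; apply/eqP; rewrite -subr_eq0 -normr_eq0; apply/eqP.
by have := psumr_eq0P (fun i _ => normr_ge0 (d i)) S0; move/(_ eta isT).
Qed.


Local Notation m := (nedges E).
Local Notation ftype := {ffun 'I_m -> edge}.

Definition phi (sigma : ftype) : config :=
  [ffun f => ~~ internal bnd f || [exists i, exists j,
     [&& sigma i == f, neighb (val f) (val (sigma j)) & (j < i)%N]]].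

Lemma sigma_onto (sigma : ftype) : injective sigma -> forall f, exists i, sigma i = f.
Proof.
move=> inj f; have := inj_card_onto inj (_ : #|edge| <= #|'I_m|)%N f.
by rewrite card_ord => /(_ (leqnn _)) /codomP [i ->]; exists i.
Qed.

Lemma phi_adm (sigma : ftype) : injective sigma -> admissible bnd (phi sigma).
Proof.
move=> inj; apply/andP; split.
  by apply/forallP => f; apply/implyP => nf; rewrite ffunE nf.
apply/forallP => e; apply/forallP => f; apply/implyP => /and3P [ie if_ nef].
have [i ei] := sigma_onto inj e; have [j fj] := sigma_onto inj f.
rewrite !ffunE.
have nij : i != j.
  by apply/eqP => ij; move: nef; rewrite -ei -fj ij neighb_irr.
case: (ltngtP i j) => [ij|ji|/val_inj ij]; last by rewrite ij eqxx in nij.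
  apply/orP; right; apply/orP; right; apply/existsP; exists j; apply/existsP; exists i.
  by rewrite fj eqxx ei neighbC nef ij.
apply/orP; left; apply/orP; right; apply/existsP; exists i; apply/existsP; exists j.
by rewrite ei eqxx fj nef ji.
Qed.

Definition Cov (sigma : ftype) (n : nat) : {set edge} :=
  [set f | ~~ internal bnd f || [exists i : 'I_m,
     (i < n)%N && ((sigma i == f) || neighb (val f) (val (sigma i)))]].

Definition Eta (sigma : ftype) (n : nat) : config :=
  [ffun f => ~~ internal bnd f || [exists i : 'I_m,
     [&& (i < n)%N, neighb (val f) (val (sigma i)) & f \notin Cov sigma i]]].

Lemma ex_split (P : pred 'I_m) (i : 'I_m) n : nat_of_ord i = n ->
  [exists k : 'I_m, (k < n.+1)%N && P k] = [exists k : 'I_m, (k < n)%N && P k] || P i.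
Proof.
move=> iv; apply/existsP/orP => [[k /andP [kn Pk]] | [/existsP [k /andP [kn Pk]] | Pi]].
- rewrite ltnS leq_eqVlt in kn; case/orP: kn => [/eqP kn | kn].
    by right; suff -> : i = k by []; apply: val_inj; rewrite /= kn iv.
  by left; apply/existsP; exists k; rewrite kn Pk.
- by exists k; rewrite Pk ltnS ltnW.
- by exists i; rewrite iv ltnSn Pi.
Qed.

Lemma sim_char (sigma : ftype) n : (n <= m)%N -> sim bnd sigma n = (Eta sigma n, Cov sigma n).
Proof.
elim: n => [_|n IH lt].
  rewrite /sim /sim_init; congr pair.
    apply/ffunP => f; rewrite !ffunE.
    have -> : [exists i : 'I_m, [&& (i < 0)%N, neighb (val f) (val (sigma i)) & f \notin Cov sigma i]] = false.
      by apply/existsP => -[i]; rewrite ltn0.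
    by rewrite orbF.
  apply/setP => f; rewrite !inE.
  have -> : [exists i : 'I_m, (i < 0)%N && ((sigma i == f) || neighb (val f) (val (sigma i)))] = false.
    by apply/existsP => -[i]; rewrite ltn0.
  by rewrite orbF.
cbn [sim]; case: insubP => [i _ iv|]; last by rewrite lt.
move: iv => /= iv.
rewrite IH; last exact: ltnW.
rewrite /sim_step; cbn [fst snd]; congr pair.
  apply/ffunP => f; rewrite !ffunE.
  rewrite (ex_split (fun k => neighb (val f) (val (sigma k)) && (f \notin Cov sigma k)) iv) iv.
  by rewrite -orbA [_ && neighb _ _]andbC.
apply/setP => f; rewrite !inE.
rewrite (ex_split (fun k => (sigma k == f) || neighb (val f) (val (sigma k))) iv).
by rewrite eq_sym !orbA.
Qed.


Lemma sim_stable (sigma : ftype) n k : (sim bnd sigma n).2 = setT ->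
  sim bnd sigma (n + k) = sim bnd sigma n.
Proof.
move=> full; elim: k => [|k IH]; first by rewrite addn0.
rewrite addnS; cbn [sim]; case: insub => [i|]; last exact: IH.
rewrite IH /sim_step; move: full; case: (sim bnd sigma n) => a b /= ->.
congr pair.
  by apply/ffunP => f; rewrite ffunE in_setT andFb orbF.
by apply/setP => f; rewrite !inE.
Qed.

Lemma Cov_full (sigma : ftype) : injective sigma -> Cov sigma m = setT.
Proof.
move=> inj; apply/setP => f; rewrite !inE.
have [i fi] := sigma_onto inj f.
apply/orP; right; apply/existsP; exists i.
by rewrite ltn_ord fi eqxx.
Qed.

Lemma eta_star_Eta (sigma : ftype) : injective sigma -> eta_star bnd sigma = Eta sigma m.
Proof.
move=> inj; rewrite /eta_star /first_full.
set p := fun n => (sim bnd sigma n).2 == setT.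
have pm : p m by rewrite /p sim_char // Cov_full.
have hs : has p (iota 0 m.+1).
  by apply/hasP; exists m; [rewrite mem_iota add0n ltnSn | exact: pm].
have := nth_find 0 hs; have := hs; rewrite has_find size_iota => lt.
rewrite nth_iota // add0n.
set n0 := find p _ => /eqP pn0.
rewrite -(sim_stable (m - n0) pn0) subnKC; last by rewrite -ltnS.
by rewrite sim_char.
Qed.

Lemma Eta_phi (sigma : ftype) : injective sigma -> Eta sigma m = phi sigma.
Proof.
move=> inj; apply/ffunP => f; rewrite !ffunE.
case: (boolP (internal bnd f)) => if_ //=.
have [p fp] := sigma_onto inj f.
apply/existsP/existsP => [[i /and3P [_ nfi ncov]] | [i /existsP [j /and3P [fi nfj ji]]]].
  exists p; apply/existsP; exists i; rewrite fp eqxx nfi /=.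
  case: (ltngtP i p) => // [pi|/val_inj ip].
    move: ncov; rewrite inE if_ /=; case/existsP; exists p.
    by rewrite pi fp eqxx.
  by move: nfi; rewrite ip fp neighb_irr.
pose Q := fun k : 'I_m => neighb (val f) (val (sigma k)).
have Qj : Q j by [].
case: (arg_minnP (fun k : 'I_m => nat_of_ord k) Qj) => k Qk kmin.
exists k; rewrite ltn_ord /=; apply/andP; split; first exact: Qk.
rewrite inE if_ /=; apply/negP => /existsP [l /andP [lk /orP [/eqP lf | nfl]]].
  have li : l = i by apply: inj; rewrite lf (eqP fi).
  move: (kmin j Qj) => kj.
  move: lk; rewrite li => ik.
  by have := ltn_trans ji (leq_trans ik kj); rewrite ltnn.
by move: (kmin l nfl); rewrite leqNgt lk.
Qed.


Definition cycn (k i : nat) : nat :=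
  if i == 0%N then k else if (i <= k)%N then (i - 1)%N else i.

Lemma cycn_lt k i : (k < m)%N -> (i < m)%N -> (cycn k i < m)%N.
Proof. by rewrite /cycn => ? ?; case: ifP => _; [|case: ifP => _]; lia. Qed.

Definition cyc (k i : 'I_m) : 'I_m := insubd i (cycn k i).

Lemma cyc_val k i : nat_of_ord (cyc k i) = cycn k i.
Proof.
change (val (insubd i (cycn k i)) = cycn k i).
by rewrite val_insubd (cycn_lt (ltn_ord k) (ltn_ord i)).
Qed.

Lemma cyc_inj k : injective (cyc k).
Proof.
move=> i j /(congr1 val) /=; rewrite !cyc_val => H; apply: val_inj => /=.
move: H; rewrite /cycn.
by case: ifP => /eqP ?; case: ifP => /eqP ?; try case: ifP => ?; try case: ifP => ?; lia.
Qed.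

Lemma cyc0 k i : nat_of_ord i = 0%N -> cyc k i = k.
Proof. by move=> i0; apply: val_inj; rewrite /= cyc_val /cycn i0. Qed.

Lemma cyc_k k i : cyc k i = k -> nat_of_ord i = 0%N.
Proof.
move/(congr1 val) => /=; rewrite cyc_val /cycn.
by case: ifP => /eqP ?; try case: ifP => ?; lia.
Qed.

Lemma cyc_mono k i j : nat_of_ord i != 0%N -> nat_of_ord j != 0%N ->
  (cyc k j < cyc k i)%N = (j < i)%N.
Proof.
rewrite !cyc_val /cycn => i0 j0; rewrite (negbTE i0) (negbTE j0).
move/eqP: i0 => i0; move/eqP: j0 => j0.
case: ifP => ?; case: ifP => ?; apply/idP/idP; lia.
Qed.

Definition mtf (sigma : ftype) (k : 'I_m) : ftype := [ffun i => sigma (cyc k i)].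


Lemma internalE' (e : edge) : internal bnd e = ((sval e).2 \notin bnd).
Proof. exact: internalE. Qed.

Lemma phi_spike (sigma : ftype) k : injective sigma ->
  phi (mtf sigma k) = spike bnd (sigma k) (phi sigma).
Proof.
move=> inj; case: (injF_bij (@cyc_inj k)) => cinv cK Kc.
have mtfE : forall i, mtf sigma k i = sigma (cyc k i) by move=> i; rewrite /mtf ffunE.
apply/ffunP => f; rewrite !ffunE.
case: (f =P sigma k) => [fe | nfe].
  have -> : [exists i, exists j, [&& mtf sigma k i == f,
      neighb (val f) (val (mtf sigma k j)) & (j < i)%N]] = false.
    apply/negbTE/existsP => -[i /existsP [j /and3P [fi _ ji]]].
    move: fi; rewrite mtfE fe => /eqP /inj /cyc_k i0.
    by move: ji; rewrite i0 ltn0.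
  by rewrite orbF ?fe neighb_irr internalE andTb; case: (_ \in bnd).
rewrite andFb.
have nz : forall i, cyc k i != k -> nat_of_ord i != 0%N.
  by move=> i; apply: contra => /eqP /cyc0 ->.
have [p fp] := sigma_onto inj f.
have pk : p != k by apply/eqP => pk; apply: nfe; rewrite -fp pk.
case nb: (neighb _ _).
  apply/orP; right; apply/existsP; exists (cinv p); apply/existsP; exists (cinv k).
  rewrite !mtfE !Kc fp eqxx nb /=.
  have -> : nat_of_ord (cinv k) = 0%N by apply: (@cyc_k k); rewrite Kc.
  by rewrite lt0n; apply: nz; rewrite Kc.
congr (_ || _); apply/existsP/existsP.
  move=> [i /existsP [j /and3P [fi nfj ji]]].
  have i0 : nat_of_ord i != 0%N.
    apply: nz; apply/eqP => ik; move: fi; rewrite mtfE ik => /eqP fk.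
    by apply: nfe; rewrite fk.
  have j0 : nat_of_ord j != 0%N.
    apply: nz; apply/eqP => jk; move: nfj; rewrite mtfE jk.
    by move: nb => /= ->.
  exists (cyc k i); apply/existsP; exists (cyc k j).
  by rewrite -!mtfE fi nfj /= cyc_mono.
move=> [i /existsP [j /and3P [fi nfj ji]]].
have i0 : nat_of_ord (cinv i) != 0%N.
  apply: nz; rewrite Kc; apply/eqP => ik; apply: nfe; rewrite -ik; exact/esym/eqP.
have j0 : nat_of_ord (cinv j) != 0%N.
  apply: nz; rewrite Kc; apply/eqP => jk; move: nfj; rewrite jk.
  by move: nb => /= ->.
exists (cinv i); apply/existsP; exists (cinv j).
by rewrite !mtfE !Kc fi nfj /= -(@cyc_mono k _ _ i0 j0) !Kc.
Qed.

Lemma es_phi (sigma : ftype) : sigma \in bijections E -> eta_star bnd sigma = phi sigma.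
Proof. by rewrite inE => /injectiveP inj; rewrite eta_star_Eta // Eta_phi. Qed.

Lemma bij_gt0 : (0 < #|bijections E|)%N.
Proof.
apply/card_gt0P; exists [ffun i : 'I_m => enum_val (A := edge) i].
rewrite inE; apply/injectiveP => i j; rewrite !ffunE; exact: enum_val_inj.
Qed.

Lemma gen_adm (R : realFieldType) (g : config -> R) (eta : config) :
  admissible bnd eta ->
  generator bnd g eta = \sum_e (g (spike bnd e eta) - g eta).
Proof.
move=> ad; apply: eq_bigr => e _; case Ee: (eta e); first by rewrite mul1r.
by rewrite (spike_id ad Ee) subrr mulr0.
Qed.

Lemma mtf_mem (sigma : ftype) k : (mtf sigma k \in bijections E) = (sigma \in bijections E).
Proof.
case: (injF_bij (@cyc_inj k)) => cinv cK Kc.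
rewrite !inE; apply/injectiveP/injectiveP => inj i j.
  move=> sij; apply: (can_inj Kc); apply: inj.
  by rewrite /mtf !ffunE !Kc.
by rewrite /mtf !ffunE => /inj /(@cyc_inj k).
Qed.

Lemma sum_mtf (R : realFieldType) (F : ftype -> R) k :
  \sum_(sigma in bijections E) F (mtf sigma k) = \sum_(sigma in bijections E) F sigma.
Proof.
case: (injF_bij (@cyc_inj k)) => cinv cK Kc.
have hb : bijective (mtf^~ k).
  exists (fun sigma : ftype => [ffun i => sigma (cinv i)]) => sigma;
    apply/ffunP => i; rewrite !ffunE ?cK ?Kc //.
rewrite [RHS](reindex (mtf^~ k)) /=; last exact: onW_bij.
by apply: eq_bigl => sigma; rewrite mtf_mem.
Qed.

Lemma mu_prob (R : realFieldType) : prob_on_states bnd (@law_eta_star T bnd E R).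
Proof.
have B0 : (#|bijections E|%:R : R) != 0 by rewrite pnatr_eq0 -lt0n bij_gt0.
split.
- by move=> eta; rewrite /law_eta_star divr_ge0 ?ler0n.
- move=> eta nad; rewrite /law_eta_star.
  have -> : [set sigma in bijections E | eta_star bnd sigma == eta] = set0.
    apply/setP => sigma; rewrite !inE; apply/negbTE; apply/andP => -[bs /eqP es].
    have inj : injective sigma by apply/injectiveP.
    by move: nad; rewrite -es es_phi ?phi_adm // inE; apply/injectiveP.
  by rewrite cards0 mul0r.
rewrite /law_eta_star -mulr_suml -natr_sum.
have -> : (\sum_(eta : config) #|[set sigma in bijections E | eta_star bnd sigma == eta]|)%N
    = #|bijections E|.
  rewrite -sum1_card (partition_big (@eta_star T bnd E) predT) //=.
  apply: eq_bigr => eta _; rewrite -sum1_card; apply: eq_bigl => sigma.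
  by rewrite inE.
by rewrite divff.
Qed.

Lemma mu_inv (R : realFieldType) : invariant_measure bnd (@law_eta_star T bnd E R).
Proof.
move=> g; rewrite /law_eta_star.
under eq_bigr do rewrite mulrAC.
rewrite -mulr_suml.
suff -> : \sum_(eta | admissible bnd eta)
   #|[set sigma in bijections E | eta_star bnd sigma == eta]|%:R * generator bnd g eta = 0.
  by rewrite mul0r.
have -> : \sum_(eta | admissible bnd eta)
   #|[set sigma in bijections E | eta_star bnd sigma == eta]|%:R * generator bnd g eta =
   \sum_(eta | admissible bnd eta) \sum_(sigma in bijections E | eta_star bnd sigma == eta)
      generator bnd g (eta_star bnd sigma).
  apply: eq_bigr => eta _; rewrite mulr_natl -sumr_const.
  apply: eq_big => [sigma|sigma]; first by rewrite inE.
  by rewrite inE => /andP [_ /eqP ->].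
have <- : \sum_(sigma in bijections E) generator bnd g (eta_star bnd sigma) =
   \sum_(eta | admissible bnd eta) \sum_(sigma in bijections E | eta_star bnd sigma == eta)
      generator bnd g (eta_star bnd sigma).
  apply: partition_big => sigma bs.
  by rewrite es_phi // phi_adm //; move: bs; rewrite inE => /injectiveP.
rewrite (eq_bigr (fun sigma => \sum_(k : 'I_m)
   (g (phi (mtf sigma k)) - g (phi sigma)))); last first.
  move=> sigma bs; have inj : injective sigma by move: bs; rewrite inE => /injectiveP.
  rewrite es_phi // gen_adm ?phi_adm //.
  rewrite (reindex sigma); last first.
    by apply: onW_bij; apply: inj_card_bij => //; rewrite card_ord.
  by apply: eq_bigr => k _; rewrite phi_spike.
rewrite exchange_big /=; apply: big1 => k _.
by rewrite sumrB (sum_mtf (fun s => g (phi s))) subrr.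
Qed.

End Basics.

Local Open Scope ring_scope.
Theorem mainTheorem9 (R : realFieldType) (T : finType) (bnd : {set T})
    (E : {set T * T})
    (loopless : forall e, e \in E -> e.1 != e.2)
    (oriented : forall i j, (i, j) \in E -> (j, i) \notin E)
    (bnd_orient : forall e, e \in E -> e.1 \notin bnd)
    (conn : graph_connected E) :
  let mu := @law_eta_star T bnd E R in
  [/\ prob_on_states bnd mu,
      invariant_measure bnd mu
    & forall nu : config E -> R,
        prob_on_states bnd nu -> invariant_measure bnd nu -> nu = mu].
Proof.
move=> mu; split.
- exact: (@mu_prob T bnd E loopless R).
- exact: (@mu_inv T bnd E loopless bnd_orient R).
- move=> nu pn inu; apply: functional_extensionality => eta.
  apply: (uniq_stat bnd_orient pn inu).
  + exact: (@mu_prob T bnd E loopless R).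
  + exact: (@mu_inv T bnd E loopless bnd_orient R).
Qed.
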